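(* For every Tychonoff space $X$, the following are equivalent: (1) $C_p(X)\models U_{fin}(\Gamma_f,\Omega_f)$ for every $f\in C_p(X)$; (2) $X\models U_{fin}(\Gamma_F,\Omega)$.
   Context: All spaces are Tychonoff; $C_p(X)$ is $C(X)$ with pointwise convergence topology; basic neighbourhoods are $\langle f,K,\varepsilon\rangle=\{g\in C(X):|g(x)-f(x)|<\varepsilon\ \forall x\in K\}$, $K\subseteq X$ finite, $\varepsilon>0$. For $f\in C_p(X)$, $\Gamma_f$ is the family of infinite $A\subseteq C(X)$ with $f\notin A$ such that every neighbourhood of $f$ contains all but finitely many elements of $A$. $C_p(X)\models U_{fin}(\Gamma_f,\Omega_f)$ means: for every sequence $(S_n)_{n\in\omega}$ of elements of $\Gamma_f$ there are finite $\mathcal F_n\subseteq S_n$ such that for every finite $K=\{x_1,\dots,x_k\}\subseteq X$ and $\varepsilon>0$ there is $n$ such that for each $j\le k$ some $g\in\mathcal F_n$ satisfies $|g(x_j)-f(x_j)|<\varepsilon$. Zero-set: $g^{-1}(0)$, $g\in C(X)$; cozero-set: its complement. A cover $\mathcal U$ of $X$ always means $X=\bigcup\mathcal U$, $X\notin\mathcal U$; $\gamma$-cover: infinite, each point in all but finitely many members. $\Gamma_F$: $\gamma$-covers $\mathcal U$ of $X$ by cozero-sets for which there are zero-sets $F(U)\subseteq U$ ($U\in\mathcal U$) with $\{F(U):U\in\mathcal U\}$ a $\gamma$-cover of $X$. $X\models U_{fin}(\Gamma_F,\Omega)$ means: whenever $\mathcal U_n\in\Gamma_F$ ($n\in\omega$)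 and no $\mathcal U_n$ contains a finite subcover, there are finite $\mathcal F_n\subseteq\mathcal U_n$ such that every finite subset of $X$ is contained in $\bigcup\mathcal F_n$ for some $n$ (i.e. $\{\bigcup\mathcal F_n:n\in\omega\}$ is an $\omega$-cover). *)

(* Defs.v *)
From Stdlib Require Import Reals List Rtopology.
Open Scope R_scope.

Record TopSpace := {
  carrier :> Type;
  is_open : (carrier -> Prop) -> Prop;
  open_full : is_open (fun _ => True);
  open_inter : forall U V, is_open U -> is_open V -> is_open (fun x => U x /\ V x);
  open_union : forall (F : (carrier -> Prop) -> Prop),
      (forall U, F U -> is_open U) -> is_open (fun x => exists U, F U /\ U x)
}.

Definition is_closed (X : TopSpace) (C : X -> Prop) : Prop :=
  is_open X (fun x => ~ C x).

Definition continuous_map (X : TopSpace) (f : X -> R) : Prop :=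
  forall V : R -> Prop, open_set V -> is_open X (fun x => V (f x)).

Definition T1 (X : TopSpace) : Prop :=
  forall x : X, is_closed X (fun y => y = x).

Definition completely_regular (X : TopSpace) : Prop :=
  forall (C : X -> Prop) (x : X), is_closed X C -> ~ C x ->
    exists f : X -> R, continuous_map X f /\ f x = 0 /\ forall y, C y -> f y = 1.

Definition Tychonoff (X : TopSpace) : Prop := T1 X /\ completely_regular X.

Definition finite_set {A : Type} (S : A -> Prop) : Prop :=
  exists l : list A, forall a, S a -> In a l.

Definition infinite_set {A : Type} (S : A -> Prop) : Prop := ~ finite_set S.

Definition basic_nbhd (X : TopSpace) (f : X -> R) (K : list X) (eps : R)
  (g : X -> R) : Prop :=
  forall x, In x K -> Rabs (g x - f x) < eps.

Definition Gamma_f (X : TopSpace) (f : X -> R) (A : (X -> R) -> Prop) : Prop :=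
  (forall g, A g -> continuous_map X g) /\
  infinite_set A /\ ~ A f /\
  forall (K : list X) (eps : R), 0 < eps ->
    finite_set (fun g => A g /\ ~ basic_nbhd X f K eps g).

Definition Cp_Ufin_Gamma_Omega (X : TopSpace) (f : X -> R) : Prop :=
  forall S : nat -> ((X -> R) -> Prop),
    (forall n, Gamma_f X f (S n)) ->
    exists F : nat -> list (X -> R),
      (forall n g, In g (F n) -> S n g) /\
      forall (K : list X) (eps : R), 0 < eps ->
        exists n, forall x, In x K ->
          exists g, In g (F n) /\ Rabs (g x - f x) < eps.

Definition zero_set (X : TopSpace) (Z : X -> Prop) : Prop :=
  exists g : X -> R, continuous_map X g /\ forall x, Z x <-> g x = 0.

Definition cozero_set (X : TopSpace) (U : X -> Prop) : Prop :=
  exists g : X -> R, continuous_map X g /\ forall x, U x <-> g x <> 0.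

Definition is_cover (X : TopSpace) (C : (X -> Prop) -> Prop) : Prop :=
  (forall x, exists U, C U /\ U x) /\
  (forall U, C U -> exists x, ~ U x).

Definition gamma_cover (X : TopSpace) (C : (X -> Prop) -> Prop) : Prop :=
  is_cover X C /\ infinite_set C /\
  forall x : X, finite_set (fun U => C U /\ ~ U x).

Definition Gamma_F (X : TopSpace) (C : (X -> Prop) -> Prop) : Prop :=
  gamma_cover X C /\ (forall U, C U -> cozero_set X U) /\
  exists F : (X -> Prop) -> (X -> Prop),
    (forall U, C U -> zero_set X (F U) /\ forall x, F U x -> U x) /\
    gamma_cover X (fun Z => exists U, C U /\ Z = F U).

Definition has_finite_subcover (X : TopSpace) (C : (X -> Prop) -> Prop) : Prop :=
  exists l : list (X -> Prop),
    (forall U, In U l -> C U) /\ forall x : X, exists U, In U l /\ U x.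

Definition X_Ufin_GammaF_Omega (X : TopSpace) : Prop :=
  forall C : nat -> ((X -> Prop) -> Prop),
    (forall n, Gamma_F X (C n)) ->
    (forall n, ~ has_finite_subcover X (C n)) ->
    exists F : nat -> list (X -> Prop),
      (forall n U, In U (F n) -> C n U) /\
      forall K : list X, exists n, forall x, In x K ->
        exists U, In U (F n) /\ U x.

(* Main.v *)
Require Import Defs.
From Stdlib Require Import Reals List Rtopology.
From Stdlib Require Import Lra Lia ZArith.
From Stdlib Require Import Classical FunctionalExtensionality PropExtensionality ClassicalEpsilon.
Open Scope R_scope.

Lemma local_open (X : TopSpace) (P : X -> Prop) :
  (forall x, P x -> exists O, is_open X O /\ O x /\ forall y, O y -> P y) -> is_open X P.
Proof.
  intros H.
  assert (E : (fun x => exists U, (is_open X U /\ forall y, U y -> P y) /\ U x) = P).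
  { apply functional_extensionality; intro x; apply propositional_extensionality; split.
    - intros [U [[_ HU] Ux]]; auto.
    - intros Px; destruct (H x Px) as [O [HO [Ox HO']]]; exists O; auto. }
  rewrite <- E. apply open_union. intros U [HU _]; exact HU.
Qed.

Lemma cont_disc (X : TopSpace) (a : X -> R) (c : R) (d : posreal) :
  continuous_map X a -> is_open X (fun y => Rabs (a y - c) < d).
Proof. intros Ha. apply (Ha (disc c d)). apply disc_P1. Qed.

Lemma cont_comp_pt (X : TopSpace) (a : X -> R) (phi : R -> R) :
  continuous_map X a -> (forall x, continuity_pt phi (a x)) ->
  continuous_map X (fun x => phi (a x)).
Proof.
  intros Ha Hphi V HV. apply local_open. intros x Vx.
  destruct (HV _ Vx) as [e He].
  destruct (Hphi x e (cond_pos e)) as [alp [Halp Hd]].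
  exists (fun y => Rabs (a y - a x) < mkposreal alp Halp). split; [apply cont_disc; auto|].
  split. { simpl. rewrite Rminus_diag, Rabs_R0. auto. }
  intros y Hy. apply He. unfold disc.
  destruct (Req_dec (a y) (a x)) as [E|E]. { rewrite E, Rminus_diag, Rabs_R0. apply cond_pos. }
  apply (Hd (a y)). split. { unfold D_x, no_cond; split; auto. }
  exact Hy.
Qed.

Lemma cont_comp (X : TopSpace) (a : X -> R) (phi : R -> R) :
  continuous_map X a -> continuity phi -> continuous_map X (fun x => phi (a x)).
Proof. intros; apply cont_comp_pt; auto. Qed.

Lemma cont_plus (X : TopSpace) (a b : X -> R) :
  continuous_map X a -> continuous_map X b -> continuous_map X (fun x => a x + b x).
Proof.
  intros Ha Hb V HV. apply local_open. intros x Vx.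
  destruct (HV _ Vx) as [e He].
  assert (H2 : 0 < e / 2) by (generalize (cond_pos e); lra).
  exists (fun y => Rabs (a y - a x) < mkposreal _ H2 /\ Rabs (b y - b x) < mkposreal _ H2).
  split. { apply open_inter; apply cont_disc; auto. }
  split. { simpl. rewrite !Rminus_diag, Rabs_R0. auto. }
  intros y [Hy1 Hy2]. apply He. unfold disc. simpl in *.
  replace (a y + b y - (a x + b x)) with ((a y - a x) + (b y - b x)) by ring.
  eapply Rle_lt_trans; [apply Rabs_triang|]. lra.
Qed.

Lemma cont_const (X : TopSpace) (c : R) : continuous_map X (fun _ => c).
Proof.
  intros V HV. apply local_open. intros x Vx. exists (fun _ => True).
  split; [apply open_full|]. auto.
Qed.

Lemma cont_opp (X : TopSpace) (a : X -> R) :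
  continuous_map X a -> continuous_map X (fun x => - a x).
Proof. intros Ha. apply (cont_comp X a Ropp Ha). apply continuity_opp. apply derivable_continuous, derivable_id. Qed.

Lemma cont_minus (X : TopSpace) (a b : X -> R) :
  continuous_map X a -> continuous_map X b -> continuous_map X (fun x => a x - b x).
Proof. intros Ha Hb. apply (cont_plus X a (fun x => - b x)); auto. apply cont_opp; auto. Qed.

Lemma cont_sqr (X : TopSpace) (a : X -> R) :
  continuous_map X a -> continuous_map X (fun x => a x * a x).
Proof. intros Ha. apply (cont_comp X a (fun t => t * t) Ha). apply continuity_mult; apply derivable_continuous, derivable_id. Qed.

Lemma cont_abs (X : TopSpace) (a : X -> R) :
  continuous_map X a -> continuous_map X (fun x => Rabs (a x)).
Proof. intros Ha. apply (cont_comp X a Rabs Ha). apply Rcontinuity_abs. Qed.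

Lemma cont_scal (X : TopSpace) (c : R) (a : X -> R) :
  continuous_map X a -> continuous_map X (fun x => c * a x).
Proof. intros Ha. apply (cont_comp X a (fun t => c * t) Ha). apply continuity_scal, derivable_continuous, derivable_id. Qed.

Lemma cont_mult (X : TopSpace) (a b : X -> R) :
  continuous_map X a -> continuous_map X b -> continuous_map X (fun x => a x * b x).
Proof.
  intros Ha Hb.
  assert (E : (fun x => a x * b x) = (fun x => / 4 * ((a x + b x) * (a x + b x) - (a x - b x) * (a x - b x)))).
  { apply functional_extensionality; intro; field. }
  rewrite E. apply cont_scal. apply cont_minus; apply cont_sqr; [apply cont_plus|apply cont_minus]; auto.
Qed.

Lemma cont_inv (X : TopSpace) (a : X -> R) :
  continuous_map X a -> (forall x, a x <> 0) -> continuous_map X (fun x => / a x).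
Proof.
  intros Ha Hn. apply (cont_comp_pt X a Rinv Ha). intros x.
  apply (continuity_pt_inv (fun t => t)); auto.
  apply derivable_continuous_pt, derivable_pt_id.
Qed.

Lemma finite_exact {A} (P : A -> Prop) : finite_set P ->
  exists l, (forall a, In a l -> P a) /\ (forall a, P a -> In a l).
Proof.
  intros [l Hl].
  assert (G : exists l0, (forall a, In a l0 -> P a) /\ (forall a, P a -> In a l -> In a l0)).
  { clear Hl. induction l as [|b l IH].
    - exists nil; simpl; tauto.
    - destruct IH as [l0 [H1 H2]]. destruct (classic (P b)) as [Pb|nPb].
      + exists (b :: l0); simpl; split.
        * intros a [<-|Ha]; auto.
        * intros a Pa [<-|Ha]; auto.
      + exists l0; split; auto. intros a Pa [<-|Ha]; [tauto|auto]. }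
  destruct G as [l0 [H1 H2]]; exists l0; split; auto.
Qed.

Lemma finite_sub {A} (P Q : A -> Prop) : (forall a, P a -> Q a) -> finite_set Q -> finite_set P.
Proof. intros H [l Hl]; exists l; auto. Qed.

Lemma finite_or {A} (P Q : A -> Prop) : finite_set P -> finite_set Q -> finite_set (fun a => P a \/ Q a).
Proof. intros [l1 H1] [l2 H2]; exists (l1 ++ l2); intros a [Ha|Ha]; apply in_or_app; auto. Qed.

Lemma finite_image {A B} (P : A -> Prop) (phi : B -> A) (l : list B) :
  (forall a, P a -> exists b, In b l /\ a = phi b) -> finite_set P.
Proof.
  intros H; exists (map phi l); intros a Pa; destruct (H a Pa) as [b [Hb ->]]; apply in_map; auto.
Qed.

Lemma infinite_ex {A} (P Q : A -> Prop) : infinite_set P -> finite_set Q -> exists a, P a /\ ~ Q a.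
Proof.
  intros HP HQ. apply NNPP; intro N. apply HP. apply (finite_sub P Q); auto.
  intros a Pa. apply NNPP; intro nQ. apply N; eauto.
Qed.

Lemma list_choice {A B} (l : list A) (P : A -> B -> Prop) :
  (forall a, In a l -> exists b, P a b) ->
  exists lb, (forall b, In b lb -> exists a, In a l /\ P a b) /\
             (forall a, In a l -> exists b, In b lb /\ P a b).
Proof.
  induction l as [|a l IH]; intros H.
  - exists nil; simpl; split; intros; tauto.
  - destruct (H a (or_introl eq_refl)) as [b Hb].
    destruct IH as [lb [H1 H2]]. { intros; apply H; simpl; auto. }
    exists (b :: lb); split.
    + intros b' [<-|Hb']; [exists a; simpl; auto|]. destruct (H1 b' Hb') as [a' [? ?]]; exists a'; simpl; auto.
    + intros a' [<-|Ha']; [exists b; simpl; auto|]. destruct (H2 a' Ha') as [b' [? ?]]; exists b'; simpl; auto.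
Qed.

Lemma exist_h (X : TopSpace) (U Z : X -> Prop) :
  cozero_set X U -> zero_set X Z -> (forall x, Z x -> U x) ->
  exists h, continuous_map X h /\ (forall x, Z x -> h x = 0) /\ (forall x, ~ U x -> h x = 1).
Proof.
  intros [g [Hg HgU]] [k [Hk HkZ]] HZU.
  assert (Hpos : forall x, k x * k x + g x * g x <> 0).
  { intros x E. assert (k x = 0 /\ g x = 0) as [E1 E2] by nra.
    apply (proj1 (HgU x)); auto. apply HZU, HkZ; auto. }
  exists (fun x => k x * k x * / (k x * k x + g x * g x)). split; [|split].
  - apply cont_mult; [apply cont_sqr; auto|]. apply cont_inv; auto.
    apply cont_plus; apply cont_sqr; auto.
  - intros x Zx. rewrite (proj1 (HkZ x) Zx). ring.
  - intros x nU. assert (g x = 0) as E by (apply NNPP; intro N; apply nU, HgU; auto).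
    rewrite E. field. intro E2. apply nU, HZU, HkZ. nra.
Qed.

Lemma dir12 (X : TopSpace) :
  (forall f : X -> R, continuous_map X f -> Cp_Ufin_Gamma_Omega X f) ->
  X_Ufin_GammaF_Omega X.
Proof.
  intros H1 C HC HnF.
  destruct (choice (fun n F => (forall U, C n U -> zero_set X (F U) /\ forall x, F U x -> U x) /\
     gamma_cover X (fun Z => exists U, C n U /\ Z = F U))) as [FF HFF].
  { intro n; apply (proj2 (proj2 (HC n))). }
  pose (Im := fun n Z => exists U, C n U /\ Z = FF n U).
  pose (good := fun n (h : X -> R) U => C n U /\ continuous_map X h /\
     (forall x, FF n U x -> h x = 0) /\ (forall x, ~ U x -> h x = 1)).
  assert (EH : forall n, exists H : (X -> Prop) -> (X -> R), forall Z, Im n Z ->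
             exists U, Z = FF n U /\ good n (H Z) U).
  { intro n. apply (choice (fun Z h => Im n Z -> exists U, Z = FF n U /\ good n h U)).
    intro Z. destruct (classic (Im n Z)) as [[U [CU EZ]]|N].
    - destruct (HFF n) as [HF1 _]. destruct (HF1 U CU) as [HZ HZU].
      destruct (exist_h X U (FF n U) (proj1 (proj2 (HC n)) U CU) HZ HZU) as [h Hh].
      exists h; intros _; exists U; unfold good; tauto.
    - exists (fun _ => 0); tauto. }
  destruct (choice _ EH) as [HH HHs]. clear EH.
  pose (S := fun n h => exists Z, Im n Z /\ h = HH n Z).
  assert (EB : forall n, exists B : (X -> R) -> (X -> Prop), forall h, S n h ->
       C n (B h) /\ forall x, ~ B h x -> h x = 1).
  { intro n. apply (choice (fun h U => S n h -> C n U /\ forall x, ~ U x -> h x = 1)).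
    intro h. destruct (classic (S n h)) as [[Z [IZ ->]]|N].
    - destruct (HHs n Z IZ) as [U [_ [? [_ [_ ?]]]]]. exists U; auto.
    - exists (fun _ => True); tauto. }
  destruct (choice _ EB) as [B HB]. clear EB.
  assert (HS : forall n, Gamma_f X (fun _ => 0) (S n)).
  { intro n. split; [|split; [|split]].
    - intros h [Z [IZ ->]]. destruct (HHs n Z IZ) as [U [_ [_ [? _]]]]; auto.
    - intro Hfin. apply (HnF n). destruct (finite_exact _ Hfin) as [lh [Hl1 Hl2]].
      destruct (list_choice lh (fun h U => C n U /\ forall x, ~ U x -> h x = 1)) as [lu [Hu1 Hu2]].
      { intros h Hh. exists (B n h). apply HB, Hl1; auto. }
      exists lu. split.
      + intros U HU. destruct (Hu1 U HU) as [h [_ [? _]]]; auto.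
      + intro x. destruct (HFF n) as [_ [_ [Hinf Hfx]]].
        destruct (infinite_ex _ _ Hinf (Hfx x)) as [Z [IZ NZ]].
        assert (Zx : Z x) by (apply NNPP; intro; apply NZ; auto).
        destruct (HHs n Z IZ) as [U [EZ [_ [_ [H0 _]]]]].
        assert (Sh : S n (HH n Z)) by (exists Z; auto).
        destruct (Hu2 _ (Hl2 _ Sh)) as [U' [HU' [_ HU'1]]].
        exists U'; split; auto. apply NNPP; intro N. apply HU'1 in N.
        rewrite H0 in N; [lra|]. rewrite <- EZ; auto.
    - intros [Z [IZ E]]. destruct (HHs n Z IZ) as [U [_ [CU [_ [_ H1']]]]].
      destruct (proj1 (proj1 (HC n)) ) as [_ Hne]. destruct (Hne U CU) as [x nx].
      apply H1' in nx. rewrite <- E in nx. lra.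
    - intros K eps Heps.
      apply (finite_sub _ (fun h => S n h /\ exists x, In x K /\ h x <> 0)).
      { intros h [Sh Nb]. split; auto. apply NNPP; intro N. apply Nb. intros x Hx.
        apply NNPP; intro N2. apply N. exists x; split; auto. intro E. apply N2. rewrite E.
        rewrite Rminus_diag, Rabs_R0. auto. }
      induction K as [|y K IH].
      + exists nil. intros h [_ [x [[] _]]].
      + apply (finite_sub _ (fun h => (S n h /\ h y <> 0) \/ (S n h /\ exists x, In x K /\ h x <> 0))).
        { intros h [Sh [x [[<-|Hx] Nx]]]; [left|right]; eauto. }
        apply finite_or; auto.
        destruct (HFF n) as [_ [_ [_ Hfx]]]. destruct (Hfx y) as [lz Hlz].
        apply (finite_image _ (HH n) lz). intros h [[Z [IZ ->]] Nh].
        exists Z; split; auto. apply Hlz. split; auto. intro Zy. apply Nh.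
        destruct (HHs n Z IZ) as [U [EZ [_ [_ [H0 _]]]]]. apply H0. rewrite <- EZ; auto. }
  destruct (H1 (fun _ => 0) (cont_const X 0) S HS) as [Fh [HF1 HF2]].
  exists (fun n => map (B n) (Fh n)). split.
  - intros n U HU. apply in_map_iff in HU. destruct HU as [h [<- Hh]]. apply HB; auto.
  - intro K. destruct (HF2 K 1 Rlt_0_1) as [n Hn]. exists n. intros x Hx.
    destruct (Hn x Hx) as [h [Hh Hlt]]. exists (B n h). split; [apply in_map; auto|].
    apply NNPP; intro N. apply (proj2 (HB n h (HF1 n h Hh))) in N.
    rewrite N in Hlt. rewrite Rminus_0_r, Rabs_R1 in Hlt. lra.
Qed.

Definition rr (n : nat) : R := / INR (S n).

Lemma rr_pos n : 0 < rr n.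
Proof. unfold rr. apply Rinv_0_lt_compat, lt_0_INR; lia. Qed.

Lemma rr_mono n m : (n <= m)%nat -> rr m <= rr n.
Proof. intros H. unfold rr. apply Rinv_le_contravar; [apply lt_0_INR; lia|apply le_INR; lia]. Qed.

Lemma rr_small eps : 0 < eps -> exists j, rr j < eps.
Proof.
  intros He. destruct (archimed (/ eps)) as [H _].
  assert (0 <= IZR (up (/ eps))) by (left; eapply Rlt_trans; [apply Rinv_0_lt_compat; eauto|eauto]).
  exists (Z.to_nat (up (/ eps))). unfold rr. rewrite S_INR, INR_IZR_INZ, Z2Nat.id.
  2:{ apply le_IZR; auto. }
  assert (H1 : 0 < / eps) by (apply Rinv_0_lt_compat; auto).
  assert (Hlt : / eps < IZR (up (/ eps)) + 1) by lra.
  apply Rinv_lt_contravar in Hlt; [|apply Rmult_lt_0_compat; lra].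
  rewrite Rinv_inv in Hlt. exact Hlt.
Qed.

Lemma pospart_zero u : u + Rabs u = 0 <-> u <= 0.
Proof. unfold Rabs; destruct (Rcase_abs u); split; intros; lra. Qed.

Lemma dir21 (X : TopSpace) :
  X_Ufin_GammaF_Omega X ->
  (forall f : X -> R, continuous_map X f -> Cp_Ufin_Gamma_Omega X f).
Proof.
  intros H2 f Hf S HS.
  pose (Ug := fun N (g : X -> R) => fun x => Rabs (g x - f x) < rr N).
  pose (deg := fun N => exists l, (forall g, In g l -> S N g) /\
          forall x, exists g, In g l /\ Rabs (g x - f x) < rr N).
  assert (bad_fin : forall N x e, 0 < e -> finite_set (fun g => S N g /\ ~ Rabs (g x - f x) < e)).
  { intros N x e He. destruct (HS N) as [_ [_ [_ H4]]].
    eapply finite_sub; [|exact (H4 (x :: nil) e He)].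
    intros g [? Hg]. split; auto. intro B. apply Hg, B; simpl; auto. }
  assert (contS : forall N g, S N g -> continuous_map X g).
  { intros N g Sg. destruct (HS N) as [Hc _]. auto. }
  destruct (classic (forall m, exists n, (m <= n)%nat /\ deg n)) as [CA|CB].
  -
    destruct (choice (fun n l => (forall g, In g l -> S n g) /\ (deg n ->
         forall x, exists g, In g l /\ Rabs (g x - f x) < rr n))) as [Fl HFl].
    { intro n. destruct (classic (deg n)) as [[l Hl]|N].
      - exists l; tauto.
      - exists nil; split; [simpl; tauto|tauto]. }
    exists Fl. split; [intros n g; apply HFl|].
    intros K eps He. destruct (rr_small eps He) as [j Hj].
    destruct (CA j) as [n [Hjn Dn]]. exists n. intros x _.
    destruct (proj2 (HFl n) Dn x) as [g [Hg Hlt]]. exists g; split; auto.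
    generalize (rr_mono _ _ Hjn); lra.
  - apply not_all_ex_not in CB. destruct CB as [m Hm].
    assert (ND : forall n, (m <= n)%nat -> ~ deg n).
    { intros n Hn D. apply Hm. eauto. }
    clear Hm.
    pose (Cn := fun n U => exists g, S (n + m)%nat g /\ U = Ug (n + m)%nat g).
    assert (Ech : forall N, exists ch : (X -> Prop) -> (X -> R), forall U,
          (exists g, S N g /\ U = Ug N g) -> S N (ch U) /\ U = Ug N (ch U)).
    { intro N. apply (choice (fun U g0 => (exists g, S N g /\ U = Ug N g) -> S N g0 /\ U = Ug N g0)).
      intro U. destruct (classic (exists g, S N g /\ U = Ug N g)) as [[g Hg]|N'].
      - exists g; auto.
      - exists (fun _ => 0); tauto. }
    destruct (choice _ Ech) as [ch Hch]. clear Ech.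
    pose (FFn := fun N U => fun x => Rabs (ch N U x - f x) <= rr N / 2).
    assert (noFS : forall n, ~ has_finite_subcover X (Cn n)).
    { intros n [lu [Hl1 Hl2]]. apply (ND (n + m)%nat); [lia|].
      destruct (list_choice lu (fun U g => S (n + m)%nat g /\ U = Ug (n + m)%nat g)) as [lg [Hg1 Hg2]].
      { intros U HU; apply Hl1; auto. }
      exists lg. split.
      - intros g Hg. destruct (Hg1 g Hg) as [U [_ [? _]]]; auto.
      - intro x. destruct (Hl2 x) as [U [HU Ux]]. destruct (Hg2 U HU) as [g [Hg [_ EU]]].
        exists g; split; auto. rewrite EU in Ux. exact Ux. }
    assert (cov : forall n x, exists U, Cn n U /\ U x).
    { intros n x. destruct (HS (n + m)%nat) as [_ [Hinf _]].
      destruct (infinite_ex _ _ Hinf (bad_fin (n + m)%nat x (rr (n + m)) (rr_pos _))) as [g [Sg Ng]].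
      exists (Ug (n + m)%nat g). split; [exists g; auto|].
      apply NNPP; intro N. apply Ng; split; auto. }
    assert (inf : forall n, infinite_set (Cn n)).
    { intros n Hfin. destruct (finite_exact _ Hfin) as [l [H1' H2']]. apply (noFS n).
      exists l; split; auto. intro x. destruct (cov n x) as [U [CU Ux]]. exists U; auto. }
    assert (out : forall n U, Cn n U -> exists x, ~ U x).
    { intros n U [g [Sg ->]]. apply NNPP; intro N. apply (ND (n + m)%nat); [lia|].
      exists (g :: nil); split; [intros g' [<-|[]]; auto|].
      intro x. exists g; split; [simpl; auto|]. apply NNPP; intro N2. apply N. exists x; auto. }
    assert (K1 : forall n x, finite_set (fun U => Cn n U /\ ~ FFn (n + m)%nat U x)).
    { intros n x. destruct (bad_fin (n + m)%nat x (rr (n + m) / 2)) as [l Hl].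
      { generalize (rr_pos (n + m)); lra. }
      apply (finite_image _ (Ug (n + m)%nat) l). intros U [CU NF].
      destruct (Hch _ U CU) as [Sc EU]. exists (ch (n + m)%nat U). split; auto.
      apply Hl. split; auto. intro Hlt. apply NF. unfold FFn. lra. }
    assert (GF : forall n, Gamma_F X (Cn n)).
    { intro n. split; [|split].
      - split; [split; [apply cov|apply out]|split; [apply inf|]].
        intro x. destruct (bad_fin (n + m)%nat x (rr (n + m)) (rr_pos _)) as [l Hl].
        apply (finite_image _ (Ug (n + m)%nat) l). intros U [[g [Sg ->]] NU].
        exists g; split; auto; apply Hl; split; auto.
      - intros U [g [Sg ->]].
        exists (fun x => (rr (n + m) - Rabs (g x - f x)) + Rabs (rr (n + m) - Rabs (g x - f x))).
        split.
        + apply cont_plus; [|apply cont_abs]; (apply cont_minus; [apply cont_const|apply cont_abs, cont_minus; [apply (contS _ _ Sg)|exact Hf]]).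
        + intro x. unfold Ug. rewrite pospart_zero. lra.
      - exists (FFn (n + m)%nat). split.
        + intros U CU. split.
          * exists (fun x => (Rabs (ch (n + m)%nat U x - f x) - rr (n + m) / 2) +
                 Rabs (Rabs (ch (n + m)%nat U x - f x) - rr (n + m) / 2)).
            split.
            -- apply cont_plus; [|apply cont_abs]; (apply cont_minus; [apply cont_abs, cont_minus; [apply (contS _ _ (proj1 (Hch _ U CU)))|exact Hf]|apply cont_const]).
            -- intro x. unfold FFn. rewrite pospart_zero. lra.
          * intros x Fx. destruct (Hch _ U CU) as [_ EU]. rewrite EU. unfold Ug, FFn in *.
            generalize (rr_pos (n + m)); lra.
        + assert (covZ : forall x, exists Z, (exists U, Cn n U /\ Z = FFn (n + m)%nat U) /\ Z x).
          { intro x. destruct (infinite_ex _ _ (inf n) (K1 n x)) as [U [CU NU]].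
            exists (FFn (n + m)%nat U). split; [eauto|]. apply NNPP; intro N; auto. }
          assert (sub : forall U x, Cn n U -> FFn (n + m)%nat U x -> U x).
          { intros U x CU Fx. destruct (Hch _ U CU) as [_ EU]. rewrite EU. unfold Ug, FFn in *.
            generalize (rr_pos (n + m)); lra. }
          split; [split|split].
          * exact covZ.
          * intros Z [U [CU ->]]. destruct (out n U CU) as [x nx]. exists x. intro F. apply nx. apply (sub U x CU F).
          * intros Hfin. destruct (finite_exact _ Hfin) as [lz [Hz1 Hz2]].
            destruct (list_choice lz (fun Z U => Cn n U /\ Z = FFn (n + m)%nat U)) as [lu [Hu1 Hu2]].
            { intros Z HZ. destruct (Hz1 Z HZ) as [U HU]. eauto. }
            apply (noFS n). exists lu. split.
            { intros U HU. destruct (Hu1 U HU) as [Z [_ [? _]]]; auto. }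
            intro x. destruct (covZ x) as [Z [IZ Zx]]. destruct (Hu2 Z (Hz2 Z IZ)) as [U [HU [CU EZ]]].
            exists U; split; auto. apply (sub U x CU). rewrite <- EZ; auto.
          * intro x. destruct (bad_fin (n + m)%nat x (rr (n + m) / 2)) as [l Hl].
            { generalize (rr_pos (n + m)); lra. }
            apply (finite_image _ (fun g => fun y => Rabs (g y - f y) <= rr (n + m) / 2) l).
            intros Z [[U [CU ->]] NZ]. exists (ch (n + m)%nat U). split; [|reflexivity].
            apply Hl. split; [apply (Hch _ U CU)|]. intro Hlt. apply NZ. unfold FFn. lra. }
    destruct (H2 Cn GF noFS) as [Fu [HU1 HU2]].
    assert (pts : forall j, exists L : list X, forall i, (i < j)%nat ->
               ~ (forall x, In x L -> exists U, In U (Fu i) /\ U x)).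
    { induction j as [|j [L HL]].
      - exists nil; intros; lia.
      - assert (Ey : exists y, ~ exists U, In U (Fu j) /\ U y).
        { apply NNPP; intro N. apply (noFS j). exists (Fu j); split; [apply HU1|].
          intro x. apply NNPP; intro N2. apply N; eauto. }
        destruct Ey as [y Hy]. exists (y :: L). intros i Hi Hc.
        destruct (Nat.eq_dec i j) as [->|Hne].
        + apply Hy, Hc; simpl; auto.
        + apply (HL i); [lia|]. intros x Hx; apply Hc; simpl; auto. }
    exists (fun n => match le_lt_dec m n with
                     | left _ => map (ch n) (Fu (n - m)%nat)
                     | right _ => nil end).
    assert (inS : forall n, (m <= n)%nat -> forall U, In U (Fu (n - m)%nat) ->
                   S n (ch n U) /\ U = Ug n (ch n U)).
    { intros n Hn U HU. apply Hch. destruct (HU1 _ U HU) as [g [Sg EU]].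
      replace (n - m + m)%nat with n in * by lia. eauto. }
    split.
    + intros n g. destruct (le_lt_dec m n) as [Hle|Hlt]; [|simpl; tauto].
      intro Hg. apply in_map_iff in Hg. destruct Hg as [U [<- HU]]. apply (inS n Hle U HU).
    + intros K eps He. destruct (rr_small eps He) as [j Hj].
      destruct (pts j) as [L HL]. destruct (HU2 (K ++ L)) as [i Hi].
      assert (Hij : (j <= i)%nat).
      { destruct (le_lt_dec j i) as [?|Hlt]; auto. exfalso. apply (HL i Hlt).
        intros x Hx. apply Hi. apply in_or_app; auto. }
      exists (i + m)%nat. destruct (le_lt_dec m (i + m)) as [Hle|Hlt]; [|lia].
      intros x Hx. destruct (Hi x (in_or_app _ _ _ (or_introl Hx))) as [U [HU Ux]].
      replace (i + m - m)%nat with i in * by lia.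
      assert (HU' : In U (Fu (i + m - m)%nat)) by (replace (i + m - m)%nat with i by lia; auto).
      destruct (inS (i + m)%nat Hle U HU') as [Sc EU].
      exists (ch (i + m)%nat U). split; [apply in_map; auto|].
      rewrite EU in Ux. unfold Ug in Ux. generalize (rr_mono j (i + m) ltac:(lia)). lra.
Qed.

Theorem mainTheorem13 (X : TopSpace) (HX : Tychonoff X) :
  (forall f : X -> R, continuous_map X f -> Cp_Ufin_Gamma_Omega X f) <->
  X_Ufin_GammaF_Omega X.
Proof. split; [apply dir12|apply dir21]. Qed.
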